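(* Let $N=p^nN_1$ with $n\ge2$, $p\ge3$ prime, and $N_1=q_1q_2\cdots q_r$ where $q_1,\dots,q_r$ are distinct primes, different from $p$, with $p-1\equiv0\pmod{q_i-1}$ for all $i$. Let $u$ be an integer with $\gcd(u,N)=1$, and let $d,m\in\mathbb{Z}_N$. Define $h_d(k)=\big((k+d)^p-k^p-d^p\big)m+udk$. Then $h_d(k)/\gcd(d,N)$ is a permutation polynomial over $\mathbb{Z}_{N/\gcd(d,N)}$.
   Context: A polynomial $g$ (integer-valued) is a permutation polynomial over $\mathbb{Z}_M$ if $k\mapsto g(k)\bmod M$ is a bijection of $\mathbb{Z}_M=\{0,\dots,M-1\}$; $\gcd(0,N)=N$. *)

(* Defs.v *)
From mathcomp Require Import all_boot all_order all_algebra.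
Set Implicit Arguments. Unset Strict Implicit. Unset Printing Implicit Defensive.
Import Order.TTheory GRing.Theory Num.Theory.
Local Open Scope ring_scope.

Definition perm_poly_mod (M : int) (f : int -> int) : Prop :=
  (forall k1 k2 : int, 0 <= k1 < M -> 0 <= k2 < M ->
      (f k1 = f k2 %[mod M])%Z -> k1 = k2) /\
  (forall y : int, 0 <= y < M -> exists2 k : int, 0 <= k < M & (f k = y %[mod M])%Z).

Definition hd (p : nat) (u d m : int) (k : int) : int :=
  ((k + d) ^+ p - k ^+ p - d ^+ p) * m + u * d * k.

(* Main.v *)
Require Import Defs.
From mathcomp Require Import all_boot all_order all_algebra all_field ring zify.
Import Order.TTheory GRing.Theory Num.Theory.
Local Open Scope ring_scope.

Lemma dvd_E_diff (p : nat) (d k1 k2 : int) : prime p ->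
  (p%:Z * d * (k1 - k2) %| ((k1+d)^+p - k1^+p - d^+p) - ((k2+d)^+p - k2^+p - d^+p))%Z.
Proof.
move=> pp.
have -> : ((k1+d)^+p - k1^+p - d^+p) - ((k2+d)^+p - k2^+p - d^+p)
   = ((k1+d)^+p - (k2+d)^+p) - (k1^+p - k2^+p) by ring.
rewrite !exprDn -sumrB big_ord_recl /= subn0 !expr0 !mulr1 bin0 !mulr1n.
idtac.
rewrite addrC addKr.
apply: rpred_sum => i _.
rewrite /bump /= add1n.
have ip : (i.+1 <= p)%N by exact: ltn_ord.
rewrite -mulrnBl -mulrBl.
case: (ltngtP i.+1 p) ip => // Hi _.
- have /dvdnP [c Hc] : (p %| 'C(p, i.+1))%N by apply: prime_dvd_bin => //; rewrite ltn0Sn Hi.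
  rewrite Hc -mulr_natr natrM.
  rewrite subrXX exprS.
  set S := \sum_(_ < _) _.
  have -> : (k1 - k2) * S * (d * d ^+ i) * (c%:R * p%:R)
     = (p%:Z * d * (k1 - k2)) * (S * d ^+ i * c%:R) by ring.
  exact: dvdz_mulr.
- by rewrite Hi subnn !expr0 subrr mul0r mul0rn rpred0.
Qed.
Lemma fermat_gen (p q : nat) (x : int) : prime q -> (q - 1 %| p - 1)%N -> (0 < p)%N ->
  (q%:Z %| x ^+ p - x)%Z.
Proof.
move=> qp /dvdnP [t Ht] p0.
rewrite (dvdz_pcharf (pchar_Fp qp)) rmorphB rmorphXn /= subr_eq0.
set y : 'F_q := x%:~R.
have hq : y ^+ (q - 1) * y = y.
  rewrite -exprSr; have q0 := prime_gt0 qp.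
  have -> : (q - 1).+1 = #|'F_q| by rewrite card_Fp //; lia.
  by rewrite expf_card.
have -> : p = (t * (q - 1)).+1 by lia.
apply/eqP; clear Ht; elim: t => [|t IH]; first by rewrite mul0n expr1.
rewrite mulSn -addSn exprD.
by rewrite exprSr hq -exprS IH.
Qed.

Lemma inj_surj (M : nat) (f : int -> int) : (0 < M)%N ->
  (forall k1 k2 : int, 0 <= k1 < M%:Z -> 0 <= k2 < M%:Z ->
      (f k1 = f k2 %[mod M%:Z])%Z -> k1 = k2) ->
  forall y : int, 0 <= y < M%:Z -> exists2 k : int, 0 <= k < M%:Z & (f k = y %[mod M%:Z])%Z.
Proof.
move=> M0 inj y /andP [y0 yM].
have MZ : M%:Z != 0 by lia.
have MP : 0 < M%:Z by lia.
have hb : forall z : int, (`|(z %% M%:Z)%Z|%N < M)%N.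
  move=> z; have h1 := modz_ge0 z MZ.
  have h2 := ltz_pmod z MP. lia.
pose F := fun i : 'I_M => Ordinal (hb (f (nat_of_ord i)%:Z)).
have Finj : injective F.
  move=> i j /(congr1 val) /= H; apply/val_inj => /=.
  have : (nat_of_ord i)%:Z = (nat_of_ord j)%:Z.
    apply: inj.
    - have := ltn_ord i; lia.
    - have := ltn_ord j; lia.
    have h1 := modz_ge0 (f i) MZ.
    have h2 := modz_ge0 (f j) MZ.
    lia.
  by case.
have [g gK Kg] := injF_bij Finj.
have yb : (`|y|%N < M)%N by lia.
exists (nat_of_ord (g (Ordinal yb)))%:Z.
  have := ltn_ord (g (Ordinal yb)); lia.
have := congr1 val (Kg (Ordinal yb)) => /= H.
have h1 := modz_ge0 (f (nat_of_ord (g (Ordinal yb)))%:Z) MZ.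
rewrite (modz_small (m := y)); last by lia.
lia.
Qed.
Lemma prod_gt0 (qs : seq nat) : all prime qs -> (0 < \prod_(q <- qs) q)%N.
Proof.
elim: qs => [|a s IH]; rewrite ?big_nil ?big_cons // => /andP[ha hs].
by rewrite muln_gt0 prime_gt0 ?IH.
Qed.

Lemma coprime_prime_prod (a : nat) (qs : seq nat) : prime a -> all prime qs ->
  a \notin qs -> coprime a (\prod_(q <- qs) q).
Proof.
move=> pa; elim: qs => [|b s IH]; rewrite ?big_nil ?big_cons ?coprimen1 // => /andP[hb hs].
rewrite in_cons negb_or => /andP[ab As].
rewrite coprimeMr IH // andbT prime_coprime // dvdn_prime2 //.
Qed.

Lemma dvd_prod_all (qs : seq nat) (x : nat) : uniq qs -> all prime qs ->
  (forall q, q \in qs -> q %| x)%N -> (\prod_(q <- qs) q %| x)%N.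
Proof.
elim: qs => [|b s IH]; rewrite ?big_nil ?big_cons ?dvd1n // => /andP[bs us] /andP[hb hs] H.
rewrite Gauss_dvd ?coprime_prime_prod // H ?mem_head // IH // => q qs'.
by apply: H; rewrite in_cons qs' orbT.
Qed.

Lemma dvd_N (p n : nat) (qs : seq nat) (x : nat) : prime p -> uniq qs -> all prime qs ->
  p \notin qs -> (p ^ n %| x)%N -> (forall q, q \in qs -> q %| x)%N ->
  (p ^ n * \prod_(q <- qs) q %| x)%N.
Proof.
move=> pp uq aq pq hp hq.
by rewrite Gauss_dvd ?hp ?dvd_prod_all // coprimeXl // coprime_prime_prod.
Qed.

Lemma prime_not_dvd_unit (a : nat) (u N : int) : prime a -> coprimez u N ->
  (a%:Z %| N)%Z -> ~~ (a%:Z %| u)%Z.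
Proof.
move=> pa cu aN; apply/negP => au.
have : (a%:Z %| gcdz u N)%Z by rewrite dvdz_gcd au aN.
move: cu; rewrite /coprimez => /eqP ->.
rewrite dvdzE absz_nat /= dvdn1 => /eqP a1.
by move: pa; rewrite a1.
Qed.

Lemma coprimez_prime (a : nat) (w : int) : prime a -> ~~ (a%:Z %| w)%Z -> coprimez a%:Z w.
Proof.
move=> pa; rewrite /coprimez /gcdz dvdzE absz_nat => h.
by have := prime_coprime `|w| pa; rewrite /coprime h.
Qed.

Lemma coprimez_primeX (a n : nat) (w : int) : prime a -> ~~ (a%:Z %| w)%Z -> coprimez (a ^ n)%:Z w.
Proof.
move=> pa h; have := @coprimez_prime a w pa h.
rewrite /coprimez /gcdz !absz_nat => c.
by have := @coprimeXl n a `|w| c; rewrite /coprime.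
Qed.

Lemma hd_mod_q (p q : nat) (u d m k : int) : prime q -> (q - 1 %| p - 1)%N -> (0 < p)%N ->
  (q%:Z %| hd p u d m k - u * d * k)%Z.
Proof.
move=> qp qd p0; rewrite /hd.
have -> : ((k + d) ^+ p - k ^+ p - d ^+ p) * m + u * d * k - u * d * k
  = (((k + d) ^+ p - (k + d)) - (k ^+ p - k) - (d ^+ p - d)) * m by ring.
apply: dvdz_mulr; apply: rpredB; first apply: rpredB.
all: exact: fermat_gen.
Qed.

Lemma d_dvd_hd (p : nat) (u d m k : int) : prime p -> (d %| hd p u d m k)%Z.
Proof.
move=> pp; rewrite /hd; apply: rpredD; last by apply: dvdz_mulr; apply: dvdz_mull.
apply: dvdz_mulr.
have := dvd_E_diff p d k 0 pp.
have -> : (0 + d) ^+ p - 0 ^+ p - d ^+ p = 0.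
  by rewrite add0r expr0n eqn0Ngt prime_gt0 //= subr0 subrr.
rewrite subr0 => h; apply: dvdz_trans h; rewrite -mulrA; apply: dvdz_mull; exact: dvdz_mulr.
Qed.

Theorem lemma11 (p n : nat) (qs : seq nat) (u d m : int) :
  prime p -> (3 <= p)%N -> (2 <= n)%N ->
  (0 < size qs)%N -> uniq qs -> all prime qs -> p \notin qs ->
  all (fun q => (q - 1 %| p - 1)%N) qs ->
  let N : nat := (p ^ n * \prod_(q <- qs) q)%N in
  coprimez u N%:Z ->
  0 <= d < N%:Z -> 0 <= m < N%:Z ->
  let g : int := gcdz d N%:Z in
  perm_poly_mod (N%:Z %/ g)%Z (fun k => (hd p u d m k %/ g)%Z).
Proof.
move=> pp p3 n2 qs0 uq aq pq qdiv N uN /andP[d0 dN] _ g.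
have p0 : (0 < p)%N by exact: prime_gt0.
have N0 : (0 < N)%N by rewrite muln_gt0 expn_gt0 p0 prod_gt0.
set dn := `|d|%N.
have dE : d = dn%:Z by rewrite /dn; lia.
set G := gcdn dn N.
have gE : g = G%:Z by rewrite /g /gcdz absz_nat.
have G0 : (0 < G)%N by rewrite gcdn_gt0 N0 orbT.
set M := (N %/ G)%N.
have NE : N = (M * G)%N by rewrite divnK // dvdn_gcdr.
have dnE : dn = (dn %/ G * G)%N by rewrite divnK // dvdn_gcdl.
set d' := (dn %/ G)%N.
have M0 : (0 < M)%N by move: N0; rewrite NE muln_gt0 => /andP[].
have cop : coprime M d'.
  have : G = (gcdn M d' * G)%N by rewrite muln_gcdl -NE -dnE /G gcdnC.
  move=> h; rewrite /coprime; apply/eqP.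
  by apply/eqP; rewrite -(eqn_pmul2r G0) mul1n -h.
have ME : (N%:Z %/ g)%Z = M%:Z by rewrite gE divz_nat.
rewrite ME.
have gdvd : forall k, (g %| hd p u d m k)%Z.
  move=> k; apply: dvdz_trans (d_dvd_hd p u d m k pp).
  by rewrite gE dE dvdzE !absz_nat dvdn_gcdl.
have pN : ((p ^ n)%:Z %| N%:Z)%Z by rewrite dvdzE !absz_nat dvdn_mulr.
have qN : forall q, q \in qs -> (q%:Z %| N%:Z)%Z.
  move=> q qin; rewrite dvdzE !absz_nat dvdn_mull //.
  by rewrite (big_rem q qin) /= dvdn_mulr.
have keyA : forall k1 k2 : int,
    (N%:Z %| hd p u d m k1 - hd p u d m k2)%Z -> (N%:Z %| (k1 - k2) * d)%Z.
  move=> k1 k2 H.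
  have /dvdzP [T HT] := dvd_E_diff p d k1 k2 pp.
  set w := u + p%:Z * T * m.
  have XE : hd p u d m k1 - hd p u d m k2 = ((k1 - k2) * d) * w.
    rewrite /hd /w.
    have -> : ((k1 + d) ^+ p - k1 ^+ p - d ^+ p) * m + u * d * k1
        - (((k2 + d) ^+ p - k2 ^+ p - d ^+ p) * m + u * d * k2)
      = (((k1 + d) ^+ p - k1 ^+ p - d ^+ p) - ((k2 + d) ^+ p - k2 ^+ p - d ^+ p)) * m
        + u * d * (k1 - k2) by ring.
    rewrite HT; ring.
  rewrite dvdzE absz_nat /N; apply: dvd_N => //.
  - rewrite -(absz_nat (p ^ n)) -dvdzE.
    rewrite -(@Gauss_dvdzl _ _ w); last first.
      apply: coprimez_primeX => //; apply/negP => pw.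
      have : (p%:Z %| u)%Z.
        have -> : u = w - p%:Z * (T * m) by rewrite /w; ring.
        by rewrite rpredB // dvdz_mulr.
      apply/negP; apply: prime_not_dvd_unit uN _ => //.
      by apply: dvdz_trans pN; rewrite dvdzE !absz_nat dvdn_exp // ltnW.
    rewrite -XE; exact: dvdz_trans pN H.
  - move=> q qin.
    have qp : prime q by move/allP: aq; apply.
    have qd : (q - 1 %| p - 1)%N by move/allP: qdiv => /(_ q qin).
    rewrite -(absz_nat q) -dvdzE.
    have hq : (q%:Z %| u * (d * (k1 - k2)))%Z.
      have -> : u * (d * (k1 - k2)) = (hd p u d m k1 - hd p u d m k2)
        - ((hd p u d m k1 - u * d * k1) - (hd p u d m k2 - u * d * k2)) by ring.
      have h1 := dvdz_trans (qN q qin) H.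
      by rewrite rpredB // rpredB // hd_mod_q.
    rewrite Gauss_dvdzr in hq; last first.
      apply: coprimez_prime => //; apply: prime_not_dvd_unit uN (qN q qin) => //.
    by rewrite mulrC.
have inj : forall k1 k2 : int, 0 <= k1 < M%:Z -> 0 <= k2 < M%:Z ->
    ((hd p u d m k1 %/ g)%Z = (hd p u d m k2 %/ g)%Z %[mod M%:Z])%Z -> k1 = k2.
  move=> k1 k2 r1 r2 /eqP; rewrite eqz_mod_dvd => H.
  have gnz : g != 0 by rewrite gE; lia.
  rewrite -(dvdz_mul2r gnz) mulrBl !divzK ?gdvd // in H.
  have := keyA k1 k2; rewrite NE PoszM -gE => /(_ H).
  rewrite dE dnE PoszM -gE mulrA dvdz_mul2r // => H2.
  rewrite Gauss_dvdzl in H2; last by rewrite /coprimez /gcdz !absz_nat.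
  have := eqz_mod_dvd M%:Z k1 k2; rewrite H2 => /eqP.
  by rewrite !modz_small.
split; first exact: inj.
exact: inj_surj.
Qed.
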